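(* Let $m\ge4$. If $\mathcal W_1$ is an $m\times m$ quadrilateral labyrinth set in $Q$, then for every $n\ge1$ the set $\mathcal W_n$ of white quadrilaterals of order $n$ is an $m^n\times m^n$ quadrilateral labyrinth set. That is, $\mathcal W_n\subseteq\mathcal S_{m^n}$ and $\mathcal W_n$ satisfies the tree property, the exit property and the corner property with $m$ replaced by $m^n$.
   Context: Let $Q$ be a convex quadrilateral in $\mathbb{R}^2$. Divide $Q$ into two triangles by its shorter diagonal (either diagonal if they have equal length). Label the vertices $Q_1,Q_2,Q_3,Q_4$ anticlockwise, starting at an endpoint of that diagonal, so that the diagonal is $Q_1Q_3$. Let $\Delta_1$ be the closed triangle $Q_1Q_2Q_3$ and $\Delta_2$ the closed triangle $Q_3Q_4Q_1$. Every $x\in Q$ has a unique representation $x=\sum_{i=1}^4\alpha_iQ_i$, defined as follows. If $x\in\Delta_1$, then $\alpha_4=0$ and $(\alpha_1,\alpha_2,\alpha_3)$ are the barycentric coordinates of $x$ in $\Delta_1$. If $x\in\Delta_2$, then $\alpha_2=0$ and $(\alpha_1,\alpha_3,\alpha_4)$ are the barycentric coordinates of $x$ in $\Delta_2$. For an ordered quadruple $V=(V_1,\dots,V_4)$ define $P_V:Q\to\mathbb{R}^2$ by $P_V(x)=\sum_i\alpha_iV_i$. For an integer $m\ge2$, define the following index sets: - $A_1=\{(k_1,k_2,k_3,0)\in\mathbb{Z}_{\ge0}^4:k_1+k_2+k_3=m-1,\ k_2\ne0\}$, - $A_2=\{(k_1,0,k_3,k_4)\in\mathbb{Z}_{\ge0}^4:k_1+k_3+k_4=m-1,\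 k_4\ne0\}$, - $A_3=\{(k_1,0,k_3,0)\in\mathbb{Z}_{\ge0}^4:k_1+k_3=m-1\}$, - $A=A_1\cup A_2\cup A_3$. For $k\in A$, let $S_m(k)$ be the quadrilateral with ordered vertices $R_1R_2R_3R_4$ given below. - If $k\in A_1$: $R_1=\frac{(k_1+1)Q_1+k_2Q_2+k_3Q_3}{m}$, $R_2=\frac{k_1Q_1+(k_2+1)Q_2+k_3Q_3}{m}$, $R_3=\frac{k_1Q_1+k_2Q_2+(k_3+1)Q_3}{m}$, $R_4=\frac{(k_1+1)Q_1+(k_2-1)Q_2+(k_3+1)Q_3}{m}$. - If $k\in A_2$: $R_1=\frac{(k_1+1)Q_1+k_3Q_3+k_4Q_4}{m}$, $R_2=\frac{(k_1+1)Q_1+(k_3+1)Q_3+(k_4-1)Q_4}{m}$, $R_3=\frac{k_1Q_1+(k_3+1)Q_3+k_4Q_4}{m}$, $R_4=\frac{k_1Q_1+k_3Q_3+(k_4+1)Q_4}{m}$. - If $k\in A_3$: $R_1=\frac{(k_1+1)Q_1+k_3Q_3}{m}$, $R_2=\frac{k_1Q_1+Q_2+k_3Q_3}{m}$, $R_3=\frac{k_1Q_1+(k_3+1)Q_3}{m}$, $R_4=\frac{k_1Q_1+k_3Q_3+Q_4}{m}$. Let $\mathcal S_m=\{S_m(k):k\in A\}$. For $\mathcal W\subseteq\mathcal S_m$, the graph $\mathcal G(\mathcal W)$ has vertex set $\mathcal W$, with two elements adjacent iff they have a common side. An $m\times m$ quadrilateral labyrinth set ($m\ge4$) is a set $\mathcal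 W_1\subseteq\mathcal S_m$ satisfying three properties. (1) Tree property: $\mathcal G(\mathcal W_1)$ is a tree. (2) Exit property: there is exactly one $(k_1,k_2,0,0)\in A$ with $S_m(k_1,k_2,0,0)\in\mathcal W_1$ and $S_m(0,0,k_2,k_1)\in\mathcal W_1$. There is also exactly one $(k_1,0,0,k_4)\in A$ with $S_m(k_1,0,0,k_4)\in\mathcal W_1$ and $S_m(0,k_1,k_4,0)\in\mathcal W_1$. (3) Corner property: $\mathcal W_1$ contains at most one element of $\{S_m(m-1,0,0,0),S_m(0,0,m-1,0)\}$ and at most one element of $\{S_m(0,m-1,0,0),S_m(0,0,0,m-1)\}$. Given $\mathcal W_1\subseteq\mathcal S_m$ (the white quadrilaterals of order 1), define recursively for $n\ge2$: $\mathcal W_n=\{P_{W}(W'):W'\in\mathcal W_1,\ W\in\mathcal W_{n-1}\}$. Here $P_W(W')$ is the quadrilateral whose ordered vertices are the images under $P_W$ of the ordered vertices of $W'$. Each $W\in\mathcal W_{n-1}$ is used with its ordered vertices. *)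

(* Defs.v *)
From mathcomp Require Import all_boot all_order all_algebra.
Set Implicit Arguments. Unset Strict Implicit. Unset Printing Implicit Defensive.
Import Order.TTheory GRing.Theory Num.Theory.
Local Open Scope ring_scope.

Section Defs.
Variable R : realFieldType.

Definition pt : Type := (R * R)%type.
Definition quad : Type := (pt * pt * pt * pt)%type.

Definition padd (p q : pt) : pt := (p.1 + q.1, p.2 + q.2).
Definition psub (p q : pt) : pt := (p.1 - q.1, p.2 - q.2).
Definition pscale (a : R) (p : pt) : pt := (a * p.1, a * p.2).
Definition det2 (u v : pt) : R := u.1 * v.2 - u.2 * v.1.
Definition sqdist (p q : pt) : R := (p.1 - q.1) ^+ 2 + (p.2 - q.2) ^+ 2.

Definition convex_acw (Q : quad) : Prop :=
  let '(q1, q2, q3, q4) := Q in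
  [/\ 0 < det2 (psub q2 q1) (psub q3 q1), 0 < det2 (psub q3 q2) (psub q4 q2),
      0 < det2 (psub q4 q3) (psub q1 q3) & 0 < det2 (psub q1 q4) (psub q2 q4)].

Definition shorter_diag13 (Q : quad) : Prop :=
  let '(q1, q2, q3, q4) := Q in sqdist q1 q3 <= sqdist q2 q4.

Definition comb4 (Q : quad) (a b c d : R) : pt :=
  let '(q1, q2, q3, q4) := Q in
  padd (padd (pscale a q1) (pscale b q2)) (padd (pscale c q3) (pscale d q4)).

Definition bary (A B C x : pt) : R * R * R :=
  let D := det2 (psub B A) (psub C A) in
  (det2 (psub B x) (psub C x) / D, det2 (psub C x) (psub A x) / D,
   det2 (psub A x) (psub B x) / D).

(* P_V(x) = sum_i alpha_i V_i, with alpha the unique representation of x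
   (barycentric in Delta1 = Q1Q2Q3 if x lies in it, else in Delta2 = Q3Q4Q1).
   Only meaningful for x in Q. *)
Definition Pmap (Q V : quad) (x : pt) : pt :=
  let '(q1, q2, q3, q4) := Q in
  let '(v1, v2, v3, v4) := V in
  let '(a1, a2, a3) := bary q1 q2 q3 x in
  if [&& 0 <= a1, 0 <= a2 & 0 <= a3] then
    padd (padd (pscale a1 v1) (pscale a2 v2)) (pscale a3 v3)
  else
    let '(b1, b3, b4) := bary q1 q3 q4 x in
    padd (padd (pscale b1 v1) (pscale b3 v3)) (pscale b4 v4).

Definition Pquad (Q V W : quad) : quad :=
  let '(w1, w2, w3, w4) := W in
  (Pmap Q V w1, Pmap Q V w2, Pmap Q V w3, Pmap Q V w4).

Definition inA1 (m : nat) (k : nat * nat * nat * nat) : bool :=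
  let '(k1, k2, k3, k4) := k in [&& k4 == 0%N, (k1 + k2 + k3 == m.-1)%N & k2 != 0%N].
Definition inA2 (m : nat) (k : nat * nat * nat * nat) : bool :=
  let '(k1, k2, k3, k4) := k in [&& k2 == 0%N, (k1 + k3 + k4 == m.-1)%N & k4 != 0%N].
Definition inA3 (m : nat) (k : nat * nat * nat * nat) : bool :=
  let '(k1, k2, k3, k4) := k in [&& k2 == 0%N, k4 == 0%N & (k1 + k3 == m.-1)%N].
Definition inA (m : nat) (k : nat * nat * nat * nat) : bool :=
  [|| inA1 m k, inA2 m k | inA3 m k].

(* S_m(k) with its ordered vertices R1 R2 R3 R4 (meaningful for k in A) *)
Definition Sm (Q : quad) (m : nat) (k : nat * nat * nat * nat) : quad :=
  let '(k1, k2, k3, k4) := k in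
  let c (a b c d : nat) := pscale (m%:R)^-1 (comb4 Q a%:R b%:R c%:R d%:R) in
  if inA1 m k then
    (c k1.+1 k2 k3 0%N, c k1 k2.+1 k3 0%N, c k1 k2 k3.+1 0%N, c k1.+1 k2.-1 k3.+1 0%N)
  else if inA2 m k then
    (c k1.+1 0%N k3 k4, c k1.+1 0%N k3.+1 k4.-1, c k1 0%N k3.+1 k4, c k1 0%N k3 k4.+1)
  else
    (c k1.+1 0%N k3 0%N, c k1 1%N k3 0%N, c k1 0%N k3.+1 0%N, c k1 0%N k3 1%N).

Definition inSm (Q : quad) (m : nat) (q : quad) : Prop :=
  exists2 k, inA m k & q = Sm Q m k.

Definition sides (q : quad) : seq (pt * pt) :=
  let '(r1, r2, r3, r4) := q in [:: (r1, r2); (r2, r3); (r3, r4); (r4, r1)].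
Definition same_seg (s t : pt * pt) : bool :=
  ((s.1 == t.1) && (s.2 == t.2)) || ((s.1 == t.2) && (s.2 == t.1)).
Definition adj (q q' : quad) : bool :=
  (q != q') && has (fun s => has (same_seg s) (sides q')) (sides q).

Definition tree_prop (W : quad -> Prop) : Prop :=
  (forall x y, W x -> W y ->
     exists s : seq quad, [/\ (forall z, z \in s -> W z), path adj x s & last x s = y])
  /\
  ~ (exists (x : quad) (s : seq quad),
       [/\ W x, (forall z, z \in s -> W z), (2 <= size s)%N, uniq (x :: s)
          & path adj x s && adj (last x s) x]).

Definition exit_prop (Q : quad) (m : nat) (W : quad -> Prop) : Prop :=
  (exists! k : nat * nat,
     [/\ inA m (k.1, k.2, 0%N, 0%N), W (Sm Q m (k.1, k.2, 0%N, 0%N))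
       & W (Sm Q m (0%N, 0%N, k.2, k.1))])
  /\
  (exists! k : nat * nat,
     [/\ inA m (k.1, 0%N, 0%N, k.2), W (Sm Q m (k.1, 0%N, 0%N, k.2))
       & W (Sm Q m (0%N, k.1, k.2, 0%N))]).

Definition corner_prop (Q : quad) (m : nat) (W : quad -> Prop) : Prop :=
  ~ (W (Sm Q m (m.-1, 0%N, 0%N, 0%N)) /\ W (Sm Q m (0%N, 0%N, m.-1, 0%N)))
  /\ ~ (W (Sm Q m (0%N, m.-1, 0%N, 0%N)) /\ W (Sm Q m (0%N, 0%N, 0%N, m.-1))).

Definition labyrinth (Q : quad) (m : nat) (W : quad -> Prop) : Prop :=
  [/\ (4 <= m)%N, (forall q, W q -> inSm Q m q), tree_prop W,
      exit_prop Q m W & corner_prop Q m W].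

(* W_n, the white quadrilaterals of order n (n >= 1); W_0 is unused *)
Fixpoint Wn (Q : quad) (W1 : quad -> Prop) (n : nat) : quad -> Prop :=
  match n with
  | 0 => W1
  | 1 => W1
  | S n' => fun q => exists W W', [/\ Wn Q W1 n' W, W1 W' & q = Pquad Q W W']
  end.

End Defs.

(* Main.v *)
Require Import Defs.
From mathcomp Require Import all_boot all_order all_algebra.
From mathcomp Require Import zify ring lra.
Import Order.TTheory GRing.Theory Num.Theory.

Module Aux.
Set Implicit Arguments. Unset Strict Implicit. Unset Printing Implicit Defensive.

Section G.
Variable T : eqType.
Definition connw (e : rel T) (W : T -> Prop) := forall x y, W x -> W y ->
  exists s : seq T, [/\ (forall z, z \in s -> W z), path e x s & last x s = y].
Definition acycw (e : rel T) (W : T -> Prop) :=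
  ~ (exists (x : T) (s : seq T),
       [/\ W x, (forall z, z \in s -> W z), (2 <= size s)%N, uniq (x :: s)
          & path e x s && e (last x s) x]).
Definition avoid (e : rel T) u v : rel T := fun x y =>
  e x y && ~~ (((x == u) && (y == v)) || ((x == v) && (y == u))).
Definition bridgew (e : rel T) (W : T -> Prop) := forall u v, W u -> W v -> e u v ->
  ~ exists s, [/\ (forall z, z \in s -> W z), path (avoid e u v) u s & last u s = v].

Lemma avoid_sub e u v : subrel (avoid e u v) e.
Proof. by move=> x y /andP[]. Qed.

Lemma acyc_bridge e W : symmetric e -> irreflexive e -> acycw e W -> bridgew e W.
Proof.
move=> esym eirr Hac u v Wu Wv euv [s [Ws ps ls]].
case: (shortenP ps) ls => s' ps' us' sub ls'.
apply: Hac; exists u, s'; split => //.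
- by move=> z /sub /Ws.
- case: s' ps' us' sub ls' => [|y [|z s'']] //=.
  + by move=> _ _ _ uv; rewrite -uv eirr in euv.
  + by move=> + _ _ yv; rewrite -yv /= /avoid !eqxx /= andbF.
- by rewrite (sub_path (@avoid_sub e u v) ps') ls' esym.
Qed.

Lemma path_notin e u v x s : x != u -> u \notin s ->
  path e x s -> path (avoid e u v) x s.
Proof.
elim: s x => [|y s IH] x //= xu; rewrite !inE negb_or => /andP[uy us].
case/andP=> exy ps; rewrite /avoid exy (negbTE xu) [y == u]eq_sym (negbTE uy) andbF /=.
by apply: IH => //; rewrite eq_sym.
Qed.

Lemma bridge_acyc e W : symmetric e -> bridgew e W -> acycw e W.
Proof.
move=> esym Hb [x [s [Wx Ws ss us /andP[ps el]]]].
case: s ss us ps el Ws => [|y [|z s]] //= _.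
rewrite !inE !negb_or => /andP[/andP[xy /andP[xz xs]] /andP[/andP[yz ys] us]].
case/andP=> exy /andP[eyz ps] el Ws.
apply: (Hb x (last z s)) => //.
- by apply: Ws; rewrite (in_cons y) mem_last orbT.
- by rewrite esym.
exists [:: y, z & s]; split => //=.
have ylast : y != last z s.
  by apply/negP=> /eqP yl; move: (mem_last z s); rewrite -yl inE (negbTE yz) (negbTE ys).
have xlast : x != last z s.
  by apply/negP=> /eqP xl; move: (mem_last z s); rewrite -xl inE (negbTE xz) (negbTE xs).
have h : path (avoid e x (last z s)) y (z :: s).
  apply: path_notin => //=; first by rewrite eq_sym.
  - by rewrite inE negb_or xz xs.
  - by rewrite eyz ps.
move: h => /= ->; rewrite andbT /avoid exy eqxx (negbTE ylast) /=.
by rewrite (negbTE xlast).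
Qed.
End G.

Lemma sub_pathD (T : eqType) (e e' : rel T) (A : T -> Prop) x s :
  A x -> (forall z, z \in s -> A z) -> (forall a b, A a -> A b -> e a b -> e' a b) ->
  path e x s -> path e' x s.
Proof.
move=> Ax As He; elim: s x Ax As => [|y s IH] x Ax As //= /andP[exy ps].
have Ay : A y by apply: As; rewrite inE eqxx.
rewrite (He _ _ Ax Ay exy) /=; apply: IH => // z zs; apply: As; by rewrite inE zs orbT.
Qed.

Lemma split_first (T : eqType) (p : pred T) s : has p s ->
  exists s2 z s3, [/\ s = s2 ++ z :: s3, p z & ~~ has p s2].
Proof.
elim: s => [|y s IH] //=; case py: (p y) => /= H.
  by exists [::], y, s.
case: (IH H) => s2 [z [s3 [-> pz hs2]]].
by exists (y :: s2), z, s3; rewrite /= py.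
Qed.

Section Comp.
Variables T1 T2 : eqType.
Variables (ec : rel T1) (ei : rel T2) (X : T1 -> T1 -> T2 -> T2 -> bool).
Variables (C : T1 -> Prop) (P : T2 -> Prop).
Hypotheses (ecsym : symmetric ec) (ecirr : irreflexive ec).
Hypotheses (eisym : symmetric ei) (eiirr : irreflexive ei).
Hypothesis Xsym : forall B B' t t', X B B' t t' = X B' B t' t.
Hypotheses (Cconn : connw ec C) (Cac : acycw ec C).
Hypotheses (Pconn : connw ei P) (Pac : acycw ei P).
Hypothesis Xuniq : forall B B' t t' u u', ec B B' -> P t -> P t' -> P u -> P u' ->
  X B B' t t' -> X B B' u u' -> t = u /\ t' = u'.
Hypothesis Xex : forall B B', C B -> C B' -> ec B B' ->
  exists t t', [/\ P t, P t' & X B B' t t'].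

Definition ecomp : rel (T1 * T2) := fun x y =>
  ((x.1 == y.1) && ei x.2 y.2) || (ec x.1 y.1 && X x.1 y.1 x.2 y.2).
Definition Dc (x : T1 * T2) := C x.1 /\ P x.2.

Lemma ecomp_sym : symmetric ecomp.
Proof. by move=> x y; rewrite /ecomp eq_sym eisym ecsym Xsym. Qed.
Lemma ecomp_irr : irreflexive ecomp.
Proof. by move=> x; rewrite /ecomp eiirr ecirr andbF. Qed.

Lemma lift_inner B t s : path ei t s -> path ecomp (B, t) (map (pair B) s).
Proof.
elim: s t => [|a s IH] t //= /andP[eta ps]; rewrite IH // andbT.
by rewrite /ecomp /= eqxx eta.
Qed.

Lemma conn_comp : connw ecomp Dc.
Proof.
move=> [B a] [B' b] [/= CB Pa] [/= CB' Py].
case: (Cconn CB CB') => cs [Ccs pcs lcs].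
rewrite -lcs {lcs CB'}.
elim: cs B a CB Pa Ccs pcs => [|c cs IH] B a CB Pa Ccs pcs /=.
  case: (Pconn Pa Py) => s [Ps ps ls].
  exists (map (pair B) s); split.
  - by move=> z /mapP[w ws ->]; split => //; apply: Ps.
  - exact: lift_inner.
  - by rewrite last_map ls.
have Cc : C c by apply: Ccs; rewrite inE eqxx.
case/andP: pcs => eBc pcs.
case: (Xex CB Cc eBc) => a0 [a1 [Pa0 Pa1 Xa]].
case: (Pconn Pa Pa0) => s1 [Ps1 ps1 ls1].
have [s2 [Ds2 ps2 ls2]] : exists s2, [/\ forall z, z \in s2 -> Dc z,
    path ecomp (c, a1) s2 & last (c, a1) s2 = (last c cs, b)].
  apply: IH => // z zs; apply: Ccs; by rewrite inE zs orbT.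
exists (map (pair B) s1 ++ (c, a1) :: s2); split.
- move=> z; rewrite mem_cat inE => /orP[/mapP[w ws ->]|/orP[/eqP->|zs2]].
  + by split => //; apply: Ps1.
  + by [].
  + exact: Ds2.
- rewrite cat_path lift_inner //= last_map ls1 ps2 andbT.
  by rewrite /ecomp /= eBc Xa orbT.
- by rewrite last_cat /= ls2.
Qed.

Let Cbr := acyc_bridge ecsym ecirr Cac.
Let Pbr := acyc_bridge eisym eiirr Pac.

Definition Sd B1 B0 Z := exists cs, [/\ forall c, c \in cs -> C c,
  path (avoid ec B1 B0) B1 cs & last B1 cs = Z].
Definition ncross B1 B0 : rel (T1 * T2) := fun a b =>
  ecomp a b && ~~ (((a.1 == B1) && (b.1 == B0)) || ((a.1 == B0) && (b.1 == B1))).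

Lemma side_step B1 B0 s x : Dc x -> (forall z, z \in s -> Dc z) ->
  path (ncross B1 B0) x s -> Sd B1 B0 x.1 -> Sd B1 B0 (last x s).1.
Proof.
elim: s x => [|y s IH] x Dx Ds //= /andP[nxy ps] Sx.
have Dy : Dc y by apply: Ds; rewrite inE eqxx.
apply: IH => //; first by move=> z zs; apply: Ds; rewrite inE zs orbT.
case/andP: nxy => /orP[/andP[/eqP <- _]|/andP[exy _]] ncr //.
case: Sx => cs [Ccs pcs lcs]; exists (rcons cs y.1); split.
- move=> c; rewrite mem_rcons inE => /orP[/eqP->|/Ccs] //; by case: Dy.
- by rewrite rcons_path pcs lcs /avoid exy ncr.
- by rewrite last_rcons.
Qed.

Lemma pair_eqP (a u : T1 * T2) : a.1 = u.1 -> a.2 = u.2 -> a = u.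
Proof. by case: a; case: u => ? ? ? ? /= -> ->. Qed.

Lemma ecomp_cross a b : a.1 != b.1 -> ecomp a b -> ec a.1 b.1 && X a.1 b.1 a.2 b.2.
Proof. by move=> nab; rewrite /ecomp (negbTE nab). Qed.

Lemma ecomp_same a b : a.1 = b.1 -> ecomp a b -> ei a.2 b.2.
Proof. by move=> eab; rewrite /ecomp eab eqxx ecirr /= orbF. Qed.

Lemma proj u v : u.1 = v.1 -> forall n s x, (size s <= n)%N -> Dc x -> x.1 = u.1 ->
  (forall z, z \in s -> Dc z) -> path (avoid ecomp u v) x s -> (last x s).1 = u.1 ->
  exists s', [/\ forall z, z \in s' -> P z, path (avoid ei u.2 v.2) x.2 s'
    & last x.2 s' = (last x s).2].
Proof.
move=> Euv; elim=> [|n IH] [|y s] x //=; try by move=> *; exists [::].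
move=> Hs Dx x1 Ds /andP[axy ps] ls.
have Dy : Dc y by apply: Ds; rewrite inE eqxx.
have Ds1 : forall z, z \in s -> Dc z by move=> z zs; apply: Ds; rewrite inE zs orbT.
case: (eqVneq y.1 u.1) => [y1|y1].
  case: (IH s y) => // s' [Ps' ps' ls'].
  exists (y.2 :: s'); split => //.
  - by move=> z; rewrite inE => /orP[/eqP->|/Ps'] //; case: Dy.
  - case/andP: axy => exy naxy.
    rewrite /= ps' andbT /avoid (ecomp_same _ exy); last by rewrite x1 y1.
    move: naxy; apply: contra => /orP[/andP[/eqP a /eqP b]|/andP[/eqP a /eqP b]].
    + by rewrite (pair_eqP x1 a) (pair_eqP (etrans y1 Euv) b) !eqxx.
    + by rewrite (pair_eqP (etrans x1 Euv) a) (pair_eqP y1 b) !eqxx orbT.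
have hs : has (fun z => z.1 == u.1) s.
  case: s Ds1 ps ls {Hs Ds} => [|a s] _ _; first by move=> /= e; rewrite e eqxx in y1.
  by rewrite [last _ _]/= => e; apply/hasP; exists (last a s); [exact: mem_last | rewrite e].
case: (split_first hs) => s2 [z [s3 [es z1 hs2]]].
have lyz : last y s = last z s3 by rewrite es last_cat.
move: (z1) => /eqP z1'.
have s2B : forall w, w \in y :: s2 -> w.1 != u.1.
  move=> w; rewrite inE => /orP[/eqP->//|ws2].
  by apply/negP => wB; move/negP: hs2; apply; apply/hasP; exists w.
case/andP: axy => exy naxy.
have nxy1 : x.1 != y.1 by rewrite x1 eq_sym.
case/andP: (ecomp_cross nxy1 exy) => ecxy Xxy.
have Ds2 : forall w, w \in s2 -> Dc w by move=> w ws; apply: Ds1; rewrite es mem_cat ws.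
have Dz : Dc z by apply: Ds1; rewrite es mem_cat inE eqxx orbT.
move: ps; rewrite es cat_path /= => /and3P[ps2 awz ps3].
have wB : (last y s2).1 != u.1 by apply: s2B; exact: mem_last.
have zx : z = x.
  case: (eqVneq (last y s2).1 y.1) => [wY|wY].
    case/andP: awz => ewz _.
    have nwz : (last y s2).1 != z.1 by rewrite z1'.
    case/andP: (ecomp_cross nwz ewz); rewrite wY z1' -x1 => ecyx Xwz.
    have Xyx : X y.1 x.1 y.2 x.2 by rewrite Xsym.
    have Dw : Dc (last y s2).
      by move: (mem_last y s2); rewrite inE => /orP[/eqP->|/Ds2].
    case: (Xuniq ecyx Dw.2 Dz.2 Dy.2 Dx.2 Xwz Xyx) => _ z2.
    by apply: pair_eqP; rewrite // z1' x1.
  exfalso.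
  have Sz : Sd y.1 x.1 (last y (rcons s2 z)).1.
    apply: side_step => //.
    - by move=> w; rewrite mem_rcons inE => /orP[/eqP->|/Ds2].
    - rewrite rcons_path; apply/andP; split.
        apply: (sub_pathD (A := fun a => Dc a /\ a.1 != u.1)) ps2 => //.
        + by move=> w ws; split; [apply: Ds2 | apply: s2B; rewrite inE ws orbT].
        + move=> a b [_ aB] [_ bB] /andP[eab _]; rewrite /ncross eab /= x1.
          by rewrite (negbTE aB) (negbTE bB) !andbF.
      case/andP: awz => ewz _; rewrite /ncross ewz /= x1 (negbTE wB) (negbTE wY).
      by [].
    - by exists [::].
  rewrite last_rcons z1' -x1 in Sz.
  case: Sz => cs [Ccs pcs lcs].
  apply: (Cbr Dy.1 Dx.1 _); first by rewrite ecsym.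
  by exists cs.
subst z.
have Hs3 : (size s3 <= n)%N.
  move: Hs; rewrite es size_cat /= ltnS => Hs.
  by apply: leq_trans Hs; apply: leq_trans (leqnSn _) _; exact: leq_addl.
case: (IH s3 x Hs3 Dx x1) => //.
- by move=> w ws; apply: Ds1; rewrite es mem_cat inE ws !orbT.
- by rewrite -lyz.
move=> s' [Ps' ps' ls']; exists s'; split => //.
by rewrite ls' last_cat.
Qed.

Lemma bridge_comp : bridgew ecomp Dc.
Proof.
move=> u v Du Dv euv [s [Ds ps ls]].
case: (eqVneq u.1 v.1) => [Euv|Nuv].
  have eiuv : ei u.2 v.2 by apply: ecomp_same.
  case: (proj Euv (leqnn (size s)) Du erefl Ds ps) => [|s' [Ps' ps' ls']].
    by rewrite ls.
  apply: (Pbr Du.2 Dv.2 eiuv); exists s'; split => //.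
  by rewrite ls' ls.
case/andP: (ecomp_cross Nuv euv) => ecuv Xuv.
have: Sd u.1 v.1 (last u s).1.
  apply: (side_step Du Ds); last by exists [::].
  apply: (sub_pathD (A := Dc) Du Ds _ ps) => a b Da Db /andP[eab nab].
  rewrite /ncross eab /=; apply/negP => /orP[/andP[/eqP a1 /eqP b1]|/andP[/eqP a1 /eqP b1]].
  + have nab1 : a.1 != b.1 by rewrite a1 b1.
    case/andP: (ecomp_cross nab1 eab); rewrite a1 b1 => _ Xab.
    case: (Xuniq ecuv Da.2 Db.2 Du.2 Dv.2 Xab Xuv) => a2 b2.
    by move: nab; rewrite (pair_eqP a1 a2) (pair_eqP b1 b2) !eqxx.
  + have nab1 : a.1 != b.1 by rewrite a1 b1 eq_sym.
    case/andP: (ecomp_cross nab1 eab); rewrite a1 b1 Xsym => _ Xab.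
    case: (Xuniq ecuv Db.2 Da.2 Du.2 Dv.2 Xab Xuv) => b2 a2.
    by move: nab; rewrite (pair_eqP a1 a2) (pair_eqP b1 b2) !eqxx orbT.
rewrite ls => -[cs [Ccs pcs lcs]].
by apply: (Cbr Du.1 Dv.1 ecuv); exists cs.
Qed.

Lemma tree_comp : connw ecomp Dc /\ acycw ecomp Dc.
Proof. split; [exact: conn_comp | exact: bridge_acyc ecomp_sym bridge_comp]. Qed.

End Comp.

Section Transfer.
Variables T1 T2 : eqType.
Variables (e1 : rel T1) (e2 : rel T2) (P : T1 -> Prop) (W : T2 -> Prop) (f : T1 -> T2).
Hypothesis HW : forall q, W q <-> exists2 p, P p & q = f p.
Hypothesis finj : forall p p', P p -> P p' -> f p = f p' -> p = p'.
Hypothesis fe : forall p p', P p -> P p' -> e2 (f p) (f p') = e1 p p'.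

Lemma pullback s : (forall z, z \in s -> W z) ->
  exists2 s', (forall z, z \in s' -> P z) & s = map f s'.
Proof.
elim: s => [|a s IH] Ws; first by exists [::].
case: (IH) => [z zs|s' Ps' ->]; first by apply: Ws; rewrite inE zs orbT.
case: (proj1 (HW a)) => [|p Pp ->]; first by apply: Ws; rewrite inE eqxx.
by exists (p :: s') => // z; rewrite inE => /orP[/eqP->|/Ps'].
Qed.

Lemma tr_path x s : P x -> (forall z, z \in s -> P z) ->
  path e2 (f x) (map f s) = path e1 x s.
Proof.
elim: s x => [|y s IH] x Px Ps //=.
have Py : P y by apply: Ps; rewrite inE eqxx.
rewrite fe // IH // => z zs; apply: Ps; by rewrite inE zs orbT.
Qed.

Lemma tr_uniq x s : P x -> (forall z, z \in s -> P z) ->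
  uniq (f x :: map f s) = uniq (x :: s).
Proof.
move=> Px Ps; rewrite -map_cons map_inj_in_uniq // => a b.
rewrite !inE => /orP[/eqP->|/Ps Pa] /orP[/eqP->|/Ps Pb]; exact: finj.
Qed.

Lemma tr_last x s : P x -> (forall z, z \in s -> P z) -> P (last x s).
Proof. by move=> Px Ps; move: (mem_last x s); rewrite inE => /orP[/eqP->|/Ps]. Qed.

Lemma conn_tr : connw e1 P <-> connw e2 W.
Proof.
split=> Hc.
  move=> x y /HW[p Pp ->] /HW[p' Pp' ->].
  case: (Hc _ _ Pp Pp') => s [Ps ps ls].
  exists (map f s); split.
  - by move=> z /mapP[w ws ->]; apply/HW; exists w => //; apply: Ps.
  - by rewrite tr_path.
  - by rewrite last_map ls.
move=> p p' Pp Pp'.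
have Wp : W (f p) by apply/HW; exists p.
have Wp' : W (f p') by apply/HW; exists p'.
case: (Hc _ _ Wp Wp') => s [Ws ps ls].
case: (pullback Ws) => s' Ps' es; subst s.
exists s'; split => //; first by rewrite -tr_path.
by apply: finj => //; [exact: tr_last | rewrite -last_map].
Qed.

Lemma acyc_tr : acycw e1 P <-> acycw e2 W.
Proof.
split=> Ha [x [s [Wx Ws ss us /andP[ps el]]]]; apply: Ha.
  case: (proj1 (HW x) Wx) => p Pp ex; subst x.
  case: (pullback Ws) => s' Ps' es; subst s.
  exists p, s'; split => //; first by rewrite size_map in ss.
  - by rewrite -(tr_uniq Pp Ps').
  - have Pl := tr_last Pp Ps'.
    by rewrite -(tr_path Pp Ps') ps /= -(fe Pl Pp) -last_map.
exists (f x), (map f s); split => //.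
- by apply/HW; exists x.
- by move=> z /mapP[w ws ->]; apply/HW; exists w => //; apply: Ws.
- by rewrite size_map.
- by rewrite tr_uniq.
- by rewrite tr_path // ps last_map fe //; exact: tr_last.
Qed.
End Transfer.

Definition inr (N : nat) (p : nat * nat) := (p.1 < N) && (p.2 < N).
Definition gadj : rel (nat * nat) := fun p p' =>
  ((p.1 == p'.1) && ((p.2.+1 == p'.2) || (p'.2.+1 == p.2))) ||
  ((p.2 == p'.2) && ((p.1.+1 == p'.1) || (p'.1.+1 == p.1))).
Definition Xg (m : nat) (B B' t t' : nat * nat) : bool :=
  [|| (B.1.+1 == B'.1) && (t.2 == t'.2) && (t.1 == m.-1) && (t'.1 == 0),
      (B'.1.+1 == B.1) && (t.2 == t'.2) && (t'.1 == m.-1) && (t.1 == 0),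
      (B.2.+1 == B'.2) && (t.1 == t'.1) && (t.2 == m.-1) && (t'.2 == 0) |
      (B'.2.+1 == B.2) && (t.1 == t'.1) && (t'.2 == m.-1) && (t.2 == 0)].
Definition fm (m : nat) (x : (nat * nat) * (nat * nat)) : nat * nat :=
  (x.1.1 * m + x.2.1, x.1.2 * m + x.2.2).

Lemma gadj_sym : symmetric gadj.
Proof. move=> [a b] [c d]; rewrite /gadj /=; lia. Qed.
Lemma gadj_irr : irreflexive gadj.
Proof. move=> [a b]; rewrite /gadj /=; lia. Qed.
Lemma Xg_sym m B B' t t' : Xg m B B' t t' = Xg m B' B t' t.
Proof. rewrite /Xg; lia. Qed.

Lemma eqS m B B' t t' : t < m -> t' < m -> ((B * m + t).+1 == B' * m + t') =
  ((B == B') && (t.+1 == t')) || ((B.+1 == B') && (t == m.-1) && (t' == 0)).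
Proof.
move=> tm t'm; apply/idP/idP => H; last first.
  case/orP: H => [/andP[/eqP<- /eqP<-]|/andP[/andP[/eqP<- /eqP->] /eqP->]].
    by rewrite addnS.
  by rewrite mulSn addn0; set X := B * m; lia.
case: (ltngtP B B') => h.
- have [d Hd] : exists d, B' = B + d.+1 by exists (B' - B.+1); lia.
  subst B'; clear h; move: H; rewrite mulnDl mulSn; set X := B * m; set Y := d * m.
  case: d @Y => [|d] Y H; first by rewrite /Y mul0n in H; lia.
  have : m <= Y by rewrite /Y mulSn leq_addr.
  lia.
- have [d Hd] : exists d, B = B' + d.+1 by exists (B - B'.+1); lia.
  subst B; move: H; rewrite mulnDl mulSn; set X := B' * m; set Y := d * m.
  lia.
- subst; move: H; set X := B' * m; lia.
Qed.
Lemma eqM m B B' t t' : t < m -> t' < m -> (B * m + t == B' * m + t') = (B == B') && (t == t').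
Proof.
move=> tm t'm; apply/idP/idP => H; last by case/andP: H => /eqP-> /eqP->.
case: (ltngtP B B') => h.
- have [d Hd] : exists d, B' = B + d.+1 by exists (B' - B.+1); lia.
  subst B'; move: H; rewrite mulnDl mulSn; set X := B * m; set Y := d * m; lia.
- have [d Hd] : exists d, B = B' + d.+1 by exists (B - B'.+1); lia.
  subst B; move: H; rewrite mulnDl mulSn; set X := B' * m; set Y := d * m; lia.
- subst; move: H; set X := B' * m; lia.
Qed.

Lemma Bcases (a b : nat) :
 [\/ [/\ a == b, b == a, (a.+1 == b) = false & (b.+1 == a) = false],
     [/\ (a == b) = false, (b == a) = false, a.+1 == b & (b.+1 == a) = false],
     [/\ (a == b) = false, (b == a) = false, (a.+1 == b) = false & b.+1 == a] |
     [/\ (a == b) = false, (b == a) = false, (a.+1 == b) = false & (b.+1 == a) = false]].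
Proof.
case: (ltngtP a b) => h.
- case: (eqVneq a.+1 b) => h2; [apply: Or42 | apply: Or44]; split; lia.
- case: (eqVneq b.+1 a) => h2; [apply: Or43 | apply: Or44]; split; lia.
- by apply: Or41; split; lia.
Qed.

Lemma gadj_f m x y : 0 < m -> inr m x.2 -> inr m y.2 ->
  gadj (fm m x) (fm m y) = ecomp gadj gadj (Xg m) x y.
Proof.
case: x => [[B1 B2] [t1 t2]]; case: y => [[B1' B2'] [t1' t2']] /= m0.
case/andP=> /= h1 h2 /andP[/= h1' h2'].
rewrite /gadj /fm /ecomp /Xg /=.
rewrite !eqM // !eqS // xpair_eqE /=.
case: (Bcases B1 B1') => -[-> -> -> ->]; case: (Bcases B2 B2') => -[-> -> -> ->];
  rewrite /= ?andbF ?andbT ?orbF ?orbT //=; lia.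
Qed.

Lemma fm_inj m x y : inr m x.2 -> inr m y.2 -> fm m x = fm m y -> x = y.
Proof.
case: x => [[B1 B2] [t1 t2]]; case: y => [[B1' B2'] [t1' t2']].
case/andP=> /= h1 h2 /andP[/= h1' h2'] [] /eqP e1 /eqP e2.
move: e1 e2; rewrite !eqM // => /andP[/eqP-> /eqP->] /andP[/eqP-> /eqP->] //.
Qed.

Definition Gcomp (m : nat) (C P : nat * nat -> Prop) (p : nat * nat) :=
  exists2 x, Dc C P x & p = fm m x.

Lemma divmodP m q t : 0 < m -> t < m -> (q * m + t) %/ m = q /\ (q * m + t) %% m = t.
Proof. by move=> m0 tm; rewrite divnMDl // divn_small // addn0 modnMDl modn_small. Qed.

Lemma Gcomp_char m C P p : 0 < m -> (forall t, P t -> inr m t) ->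
  Gcomp m C P p <-> C (p.1 %/ m, p.2 %/ m) /\ P (p.1 %% m, p.2 %% m).
Proof.
move=> m0 Pr; split.
  case=> [[[B1 B2] [t1 t2]] [/= CB Pt] ->] /=.
  case/andP: (Pr _ Pt) => /= h1 h2.
  by case: (divmodP B1 m0 h1) => -> ->; case: (divmodP B2 m0 h2) => -> ->.
case=> CB Pt; exists ((p.1 %/ m, p.2 %/ m), (p.1 %% m, p.2 %% m)) => //.
by rewrite /fm /= -!divn_eq; case: p {CB Pt}.
Qed.

Definition gex1 (m : nat) (P : nat * nat -> Prop) :=
  (exists i, P (i, 0) /\ P (i, m.-1)) /\
  (forall i i', P (i, 0) -> P (i, m.-1) -> P (i', 0) -> P (i', m.-1) -> i = i').
Definition gex2 (m : nat) (P : nat * nat -> Prop) :=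
  (exists j, P (0, j) /\ P (m.-1, j)) /\
  (forall j j', P (0, j) -> P (m.-1, j) -> P (0, j') -> P (m.-1, j') -> j = j').
Definition gcorner (m : nat) (P : nat * nat -> Prop) :=
  ~ (P (0, 0) /\ P (m.-1, m.-1)) /\ ~ (P (m.-1, 0) /\ P (0, m.-1)).

Lemma Xcases m B B' t t' : gadj B B' -> Xg m B B' t t' ->
 [\/ [/\ B'.1 = B.1.+1, B'.2 = B.2, t.1 = m.-1, t'.1 = 0 & t'.2 = t.2],
     [/\ B.1 = B'.1.+1, B'.2 = B.2, t.1 = 0, t'.1 = m.-1 & t'.2 = t.2],
     [/\ B'.2 = B.2.+1, B'.1 = B.1, t.2 = m.-1, t'.2 = 0 & t'.1 = t.1] |
     [/\ B.2 = B'.2.+1, B'.1 = B.1, t.2 = 0, t'.2 = m.-1 & t'.1 = t.1]].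
Proof.
case: B B' t t' => [b1 b2] [b1' b2'] [a1 a2] [a1' a2']; rewrite /gadj /Xg /= => g.
case/or4P => /andP[/andP[/andP[/eqP h1 /eqP h2] /eqP h3] /eqP h4].
- by apply: Or41; split => //; lia.
- by apply: Or42; split => //; lia.
- by apply: Or43; split => //; lia.
- by apply: Or44; split => //; lia.
Qed.

Section GC.
Variables (m : nat) (C P : nat * nat -> Prop).
Hypothesis m0 : 0 < m.
Hypothesis Pr : forall t, P t -> inr m t.
Hypotheses (Cconn : connw gadj C) (Cac : acycw gadj C).
Hypotheses (Pconn : connw gadj P) (Pac : acycw gadj P).
Hypotheses (Pex1 : gex1 m P) (Pex2 : gex2 m P).

Lemma Xuniq_g B B' t t' u u' : gadj B B' -> P t -> P t' -> P u -> P u' ->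
  Xg m B B' t t' -> Xg m B B' u u' -> t = u /\ t' = u'.
Proof.
move=> g Pt Pt' Pu Pu' Xt Xu.
case: t t' u u' Pt Pt' Pu Pu' Xt Xu => [a1 a2] [a1' a2'] [c1 c2] [c1' c2'] Pt Pt' Pu Pu' Xt Xu.
case: (Xcases g Xt) => /= -[e1 e2 e3 e4 e5]; case: (Xcases g Xu) => /= -[f1 f2 f3 f4 f5];
  try (exfalso; move: g; rewrite /gadj; lia); subst.
- by rewrite (proj2 Pex2 a2 c2 Pt' Pt Pu' Pu).
- by rewrite (proj2 Pex2 a2 c2 Pt Pt' Pu Pu').
- by rewrite (proj2 Pex1 a1 c1 Pt' Pt Pu' Pu).
- by rewrite (proj2 Pex1 a1 c1 Pt Pt' Pu Pu').
Qed.

Lemma Xex_g B B' : C B -> C B' -> gadj B B' -> exists t t', [/\ P t, P t' & Xg m B B' t t'].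
Proof.
move=> _ _; case: B B' => [b1 b2] [b1' b2']; rewrite /gadj /Xg /=.
case: Pex1 => [[i [Pi0 Pi1]] _]; case: Pex2 => [[j [P0j P1j]] _].
case/orP=> /andP[/eqP e /orP[/eqP f|/eqP f]]; subst.
- by exists (i, m.-1), (i, 0); split => //=; rewrite !eqxx /= !orbT.
- by exists (i, 0), (i, m.-1); split => //=; rewrite !eqxx /= !orbT.
- by exists (m.-1, j), (0, j); split => //=; rewrite !eqxx.
- by exists (0, j), (m.-1, j); split => //=; rewrite !eqxx /= orbT.
Qed.

Lemma tree_Gcomp : connw gadj (Gcomp m C P) /\ acycw gadj (Gcomp m C P).
Proof.
have [cc ac] := tree_comp gadj_sym gadj_irr gadj_sym gadj_irr (@Xg_sym m)
  Cconn Cac Pconn Pac Xuniq_g Xex_g.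
have HW : forall q, Gcomp m C P q <-> exists2 p, Dc C P p & q = fm m p by [].
have finj : forall p p', Dc C P p -> Dc C P p' -> fm m p = fm m p' -> p = p'.
  by move=> p p' [_ /Pr h] [_ /Pr h']; apply: fm_inj.
have fe : forall p p', Dc C P p -> Dc C P p' ->
    gadj (fm m p) (fm m p') = ecomp gadj gadj (Xg m) p p'.
  by move=> p p' [_ /Pr h] [_ /Pr h']; apply: gadj_f.
split; [exact/(conn_tr HW finj fe) | exact/(acyc_tr HW finj fe)].
Qed.
End GC.

Definition glab (N : nat) (P : nat * nat -> Prop) :=
  [/\ (forall p, P p -> inr N p), connw gadj P, acycw gadj P,
      gex1 N P /\ gex2 N P & gcorner N P].

Lemma predM M m : 0 < M -> 0 < m -> (M * m).-1 = M.-1 * m + m.-1.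
Proof. by move=> M0 m0; case: M M0 => // M _; case: m m0 => // m _; rewrite /=; nia. Qed.

Lemma glab_comp M m C P : 0 < M -> 0 < m -> glab M C -> glab m P ->
  glab (M * m) (Gcomp m C P).
Proof.
move=> M0 m0 [Cr Cc Ca [[[I [CI0 CI1]] CIu] [[J [C0J C1J]] CJu]] [Cco1 Cco2]]
  [Pr Pc Pa [Pe1 Pe2] [Pco1 Pco2]].
have ch := Gcomp_char C _ m0 Pr.
have [dL mL] : (M * m).-1 %/ m = M.-1 /\ (M * m).-1 %% m = m.-1.
  by rewrite predM //; apply: divmodP; rewrite ?ltn_predL.
have d0 : 0 %/ m = 0 by rewrite div0n.
have md0 : 0 %% m = 0 by rewrite mod0n.
have dm : forall i, i = i %/ m * m + i %% m := fun i => divn_eq i m.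
have eqdm : forall i i', i %/ m = i' %/ m -> i %% m = i' %% m -> i = i'.
  by move=> i i' h1 h2; rewrite (dm i) (dm i') h1 h2.
case: (Pe1) => [[i0 [Pi0 Pi1]] Piu]; case: (Pe2) => [[j0 [P0j P1j]] Pju].
have i0m : i0 < m by case/andP: (Pr _ Pi0).
have j0m : j0 < m by case/andP: (Pr _ P0j).
split.
- move=> p /ch [/Cr /andP[/= h1 h2] _]; apply/andP; split; by rewrite -ltn_divLR.
- by case: (tree_Gcomp m0 Pr Cc Ca Pc Pa Pe1 Pe2).
- by case: (tree_Gcomp m0 Pr Cc Ca Pc Pa Pe1 Pe2).
- split; split.
    exists (I * m + i0); rewrite !ch /= dL mL d0 md0.
    by case: (divmodP I m0 i0m) => -> ->.
  move=> i i'; rewrite !ch /= dL mL d0 md0.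
  move=> [c1 p1] [c2 p2] [c3 p3] [c4 p4].
  by apply: eqdm; [exact: CIu c1 c2 c3 c4 | exact: Piu p1 p2 p3 p4].
    exists (J * m + j0); rewrite !ch /= dL mL d0 md0.
    by case: (divmodP J m0 j0m) => -> ->.
  move=> j j'; rewrite !ch /= dL mL d0 md0.
  move=> [c1 p1] [c2 p2] [c3 p3] [c4 p4].
  by apply: eqdm; [exact: CJu c1 c2 c3 c4 | exact: Pju p1 p2 p3 p4].
- split; rewrite !ch /= dL mL d0 md0.
    by move=> [[_ p1] [_ p2]]; apply: Pco1.
  by move=> [[_ p1] [_ p2]]; apply: Pco2.
Qed.

Fixpoint Gn (m : nat) (P : nat * nat -> Prop) (n : nat) : nat * nat -> Prop :=
  match n with
  | 0 => P
  | 1 => P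
  | S n' => Gcomp m (Gn m P n') P
  end.

Lemma glab_Gn m P : 0 < m -> glab m P -> forall n, 0 < n -> glab (m ^ n) (Gn m P n).
Proof.
move=> m0 HP; elim=> [|n IH] // _.
case: n IH => [|n] IH; first by rewrite expn1.
rewrite expnSr; apply: glab_comp => //; first by rewrite expn_gt0 m0.
exact: IH.
Qed.

Definition nsides (p : nat * nat) : seq ((nat * nat) * (nat * nat)) :=
  [:: ((p.1, p.2), (p.1.+1, p.2)); ((p.1.+1, p.2), (p.1.+1, p.2.+1));
      ((p.1.+1, p.2.+1), (p.1, p.2.+1)); ((p.1, p.2.+1), (p.1, p.2))].
Definition nseg (s t : (nat * nat) * (nat * nat)) : bool :=
  ((s.1 == t.1) && (s.2 == t.2)) || ((s.1 == t.2) && (s.2 == t.1)).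

Lemma nat_adj p p' :
  (p != p') && has (fun s => has (nseg s) (nsides p')) (nsides p) = gadj p p'.
Proof.
case: p p' => [i j] [i' j']; apply/idP/idP.
  case/andP=> neq /hasP[s sin /hasP[s' s'in ns]].
  move: neq; rewrite xpair_eqE => neq.
  move: sin s'in ns; rewrite !inE => /or4P[] /eqP -> /or4P[] /eqP ->;
    rewrite /nseg /gadj /= !xpair_eqE; lia.
rewrite /gadj /= => /orP[] /andP[/eqP e /orP[] /eqP f]; subst.
- apply/andP; split; first by rewrite xpair_eqE; lia.
  by rewrite /nseg /= !eqxx /= ?orTb ?orbT.
- apply/andP; split; first by rewrite xpair_eqE; lia.
  by rewrite /nseg /= !eqxx /= ?orTb ?orbT.
- apply/andP; split; first by rewrite xpair_eqE; lia.
  by rewrite /nseg /= !eqxx /= ?orTb ?orbT.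
- apply/andP; split; first by rewrite xpair_eqE; lia.
  by rewrite /nseg /= !eqxx /= ?orTb ?orbT.
Qed.

Local Open Scope ring_scope.

Section Geo.
Variable R : realFieldType.
Variables q1 q2 q3 q4 : pt R.
Let Q : quad R := (q1, q2, q3, q4).
Let D1 := det2 (psub q2 q1) (psub q3 q1).
Let D2 := det2 (psub q3 q1) (psub q4 q1).
Hypothesis D1p : 0 < D1.
Hypothesis D2p : 0 < D2.

Definition Lf (x y : R) : pt R := padd (padd (pscale (1 - x) q1) (pscale (x - y) q2)) (pscale y q3).
Definition Uf (x y : R) : pt R := padd (padd (pscale (1 - y) q1) (pscale x q3)) (pscale (y - x) q4).
Definition Phi (x y : R) : pt R := if y <= x then Lf x y else Uf x y.

Lemma D1n : D1 != 0. Proof. by rewrite gt_eqF. Qed.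
Lemma D2n : D2 != 0. Proof. by rewrite gt_eqF. Qed.

Lemma bary_L x y : bary q1 q2 q3 (Lf x y) = (1 - x, x - y, y).
Proof.
have := D1n; rewrite /D1 /bary /Lf /det2 /psub /padd /pscale /= => hD.
by congr (_, _, _); field.
Qed.

Lemma bary_U x y : bary q1 q3 q4 (Uf x y) = (1 - y, x, y - x).
Proof.
have := D2n; rewrite /D2 /bary /Uf /det2 /psub /padd /pscale /= => hD.
by congr (_, _, _); field.
Qed.

Lemma bary_U2 x y : (bary q1 q2 q3 (Uf x y)).1.2 = - (y - x) * D2 / D1.
Proof.
have := D1n; rewrite /D1 /D2 /bary /Uf /det2 /psub /padd /pscale /= => hD.
by field.
Qed.

Lemma PhiL x y : y <= x -> Phi x y = Lf x y.
Proof. by rewrite /Phi => ->. Qed.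

Lemma PhiU x y : x <= y -> Phi x y = Uf x y.
Proof.
rewrite /Phi; case: ifP => // yx xy.
have -> : y = x by apply/eqP; rewrite eq_le yx xy.
by rewrite /Lf /Uf /padd /pscale /=; congr pair; ring.
Qed.

Definition comb3 (a b c : R) (p1 p2 p3 : pt R) : pt R :=
  padd (padd (pscale a p1) (pscale b p2)) (pscale c p3).

Lemma Pmap_L (V : quad R) x y : 0 <= y -> y <= x -> x <= 1 ->
  Pmap Q V (Lf x y) = comb3 (1 - x) (x - y) y V.1.1.1 V.1.1.2 V.1.2.
Proof.
move=> h1 h2 h3; rewrite /Pmap /Q bary_L.
case: V => [[[v1 v2] v3] v4] /=.
rewrite ifT //; apply/and3P; split; lra.
Qed.

Lemma Pmap_U (V : quad R) x y : 0 <= x -> x < y -> y <= 1 ->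
  Pmap Q V (Uf x y) = comb3 (1 - y) x (y - x) V.1.1.1 V.1.2 V.2.
Proof.
move=> h1 h2 h3; rewrite /Pmap /Q bary_U.
have := bary_U2 x y.
case: (bary q1 q2 q3 (Uf x y)) => [[a1 a2] a3] /= ea2.
have a2n : a2 < 0.
  rewrite ea2 !mulNr oppr_lt0; apply: divr_gt0 => //; apply: mulr_gt0 => //; lra.
case: V => [[[v1 v2] v3] v4] /=.
rewrite ifF //; apply/negbTE; rewrite negb_and; apply/orP; right.
by rewrite negb_and -ltNge a2n.
Qed.

Lemma comb_L a b c x1 y1 x2 y2 x3 y3 : a + b + c = 1 ->
  comb3 a b c (Lf x1 y1) (Lf x2 y2) (Lf x3 y3) =
  Lf (a * x1 + b * x2 + c * x3) (a * y1 + b * y2 + c * y3).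
Proof.
move=> h; have -> : c = 1 - a - b by rewrite -h; ring.
by rewrite /comb3 /Lf /padd /pscale /=; congr pair; ring.
Qed.

Lemma comb_U a b c x1 y1 x2 y2 x3 y3 : a + b + c = 1 ->
  comb3 a b c (Uf x1 y1) (Uf x2 y2) (Uf x3 y3) =
  Uf (a * x1 + b * x2 + c * x3) (a * y1 + b * y2 + c * y3).
Proof.
move=> h; have -> : c = 1 - a - b by rewrite -h; ring.
by rewrite /comb3 /Uf /padd /pscale /=; congr pair; ring.
Qed.

Definition sqr (M r1 r2 : R) : quad R :=
  (Phi (r1 / M) (r2 / M), Phi ((r1 + 1) / M) (r2 / M),
   Phi ((r1 + 1) / M) ((r2 + 1) / M), Phi (r1 / M) ((r2 + 1) / M)).

Lemma Pmap_sqr M r1 r2 u v : 0 < M -> [\/ r1 = r2, r1 + 1 <= r2 | r2 + 1 <= r1] ->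
  0 <= u <= 1 -> 0 <= v <= 1 ->
  Pmap Q (sqr M r1 r2) (Phi u v) = Phi ((r1 + u) / M) ((r2 + v) / M).
Proof.
move=> M0 Hr /andP[u0 u1] /andP[v0 v1].
have ld : forall a b, (a / M <= b / M) = (a <= b).
  by move=> a b; rewrite ler_pM2r // invr_gt0.
have Mn : M != 0 by rewrite gt_eqF.
case: (lerP v u) => vu.
  rewrite PhiL // Pmap_L //= .
  case: Hr => [e|e|e].
  - rewrite !PhiL; try by rewrite ld; lra.
    rewrite comb_L; last by ring.
    by congr Lf; field.
  - rewrite !PhiU; try by rewrite ld; lra.
    rewrite comb_U; last by ring.
    by congr Uf; field.
  - rewrite !PhiL; try by rewrite ld; lra.
    rewrite comb_L; last by ring.
    by congr Lf; field.
rewrite PhiU ?(ltW vu) // Pmap_U //=.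
case: Hr => [e|e|e].
- rewrite !PhiU; try by rewrite ld; lra.
  rewrite comb_U; last by ring.
  by congr Uf; field.
- rewrite !PhiU; try by rewrite ld; lra.
  rewrite comb_U; last by ring.
  by congr Uf; field.
- rewrite !PhiL; try by rewrite ld; lra.
  rewrite comb_L; last by ring.
  by congr Lf; field.
Qed.

Lemma Phi_inj x y x' y' : Phi x y = Phi x' y' -> x = x' /\ y = y'.
Proof.
have n1 := D1n; have n2 := D2n.
rewrite /Phi; case: ifP => h; case: ifP => h' e.
- have ex : (x - x') * D1 = (q3.2 - q2.2) * ((Lf x y).1 - (Lf x' y').1)
              - (q3.1 - q2.1) * ((Lf x y).2 - (Lf x' y').2).
    by rewrite /D1 /Lf /det2 /psub /padd /pscale /=; ring.
  have ey : (y - y') * D1 = (q2.1 - q1.1) * ((Lf x y).2 - (Lf x' y').2)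
              - (q2.2 - q1.2) * ((Lf x y).1 - (Lf x' y').1).
    by rewrite /D1 /Lf /det2 /psub /padd /pscale /=; ring.
  rewrite e !subrr !mulr0 subrr in ex ey.
  move/eqP: ex; rewrite mulf_eq0 (negbTE n1) orbF subr_eq0 => /eqP ->.
  by move/eqP: ey; rewrite mulf_eq0 (negbTE n1) orbF subr_eq0 => /eqP ->.
- exfalso.
  have f1 : det2 (psub q3 q1) (psub (Lf x y) q1) = - ((x - y) * D1).
    by rewrite /D1 /Lf /det2 /psub /padd /pscale /=; ring.
  have f2 : det2 (psub q3 q1) (psub (Uf x' y') q1) = (y' - x') * D2.
    by rewrite /D2 /Uf /det2 /psub /padd /pscale /=; ring.
  have g1 : 0 <= (x - y) * D1 by apply: mulr_ge0; [lra | exact: ltW].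
  have g2 : 0 < (y' - x') * D2.
    by apply: mulr_gt0 => //; move/negbT: h'; rewrite -ltNge; lra.
  rewrite e f2 in f1; lra.
- exfalso.
  have f1 : det2 (psub q3 q1) (psub (Lf x' y') q1) = - ((x' - y') * D1).
    by rewrite /D1 /Lf /det2 /psub /padd /pscale /=; ring.
  have f2 : det2 (psub q3 q1) (psub (Uf x y) q1) = (y - x) * D2.
    by rewrite /D2 /Uf /det2 /psub /padd /pscale /=; ring.
  have g1 : 0 <= (x' - y') * D1 by apply: mulr_ge0; [lra | exact: ltW].
  have g2 : 0 < (y - x) * D2.
    by apply: mulr_gt0 => //; move/negbT: h; rewrite -ltNge; lra.
  rewrite -e f2 in f1; lra.
- have ex : (x - x') * D2 = (q4.2 - q1.2) * ((Uf x y).1 - (Uf x' y').1)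
              - (q4.1 - q1.1) * ((Uf x y).2 - (Uf x' y').2).
    by rewrite /D2 /Uf /det2 /psub /padd /pscale /=; ring.
  have ey : (y - y') * D2 = (q3.1 - q4.1) * ((Uf x y).2 - (Uf x' y').2)
              - (q3.2 - q4.2) * ((Uf x y).1 - (Uf x' y').1).
    by rewrite /D2 /Uf /det2 /psub /padd /pscale /=; ring.
  rewrite e !subrr !mulr0 subrr in ex ey.
  move/eqP: ex; rewrite mulf_eq0 (negbTE n2) orbF subr_eq0 => /eqP ->.
  by move/eqP: ey; rewrite mulf_eq0 (negbTE n2) orbF subr_eq0 => /eqP ->.
Qed.

Definition ph (N a b : nat) : pt R := Phi (a%:R / N%:R) (b%:R / N%:R).
Definition sq (N : nat) (p : nat * nat) : quad R :=
  (ph N p.1 p.2, ph N p.1.+1 p.2, ph N p.1.+1 p.2.+1, ph N p.1 p.2.+1).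

Lemma ph_inj N a b a' b' : (0 < N)%N -> ph N a b = ph N a' b' -> a = a' /\ b = b'.
Proof.
move=> N0 /Phi_inj [e1 e2].
have Nn : N%:R != 0 :> R by rewrite pnatr_eq0 -lt0n.
move/(congr1 (fun z => z * N%:R)): e1; rewrite !mulfVK // => /eqP; rewrite eqr_nat => /eqP ->.
move/(congr1 (fun z => z * N%:R)): e2; rewrite !mulfVK // => /eqP; rewrite eqr_nat => /eqP ->.
done.
Qed.

Lemma sq_sqr N s : sq N s = sqr N%:R s.1%:R s.2%:R.
Proof. by rewrite /sq /sqr /ph -!natr1. Qed.

Lemma Pmap_ph M m s a b : (0 < M)%N -> (0 < m)%N -> (a <= m)%N -> (b <= m)%N ->
  Pmap Q (sq M s) (ph m a b) = ph (M * m) (s.1 * m + a) (s.2 * m + b).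
Proof.
move=> M0 m0 am bm.
have Mn : M%:R != 0 :> R by rewrite pnatr_eq0 -lt0n.
have mn : m%:R != 0 :> R by rewrite pnatr_eq0 -lt0n.
have mp : 0 < m%:R :> R by rewrite ltr0n.
rewrite sq_sqr /ph Pmap_sqr.
- by rewrite /ph !natrD !natrM; congr Phi; field; rewrite Mn mn.
- by rewrite ltr0n.
- case: (ltngtP s.1 s.2) => h; [apply: Or32 | apply: Or33 | apply: Or31].
  + by rewrite natr1 ler_nat.
  + by rewrite natr1 ler_nat.
  + by rewrite h.
- by rewrite divr_ge0 ?ler0n //= ler_pdivrMr // mul1r ler_nat.
- by rewrite divr_ge0 ?ler0n //= ler_pdivrMr // mul1r ler_nat.
Qed.

Lemma Pquad_sq M m s t : (0 < M)%N -> (0 < m)%N -> inr m t ->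
  Pquad Q (sq M s) (sq m t) = sq (M * m) (fm m (s, t)).
Proof.
move=> M0 m0 /andP[h1 h2].
rewrite /Pquad [sq m t]/sq [sq (M * m) _]/sq /fm; cbv beta iota.
rewrite !Pmap_ph // ?(ltnW h1) ?(ltnW h2) //.
by rewrite !addnS.
Qed.

Lemma ph_eq N a b c d : (0 < N)%N -> (ph N a b == ph N c d) = ((a, b) == (c, d)).
Proof.
move=> N0; apply/eqP/eqP => [/(ph_inj N0) [-> ->] | [-> ->]] //.
Qed.

Lemma sq_inj N p p' : (0 < N)%N -> sq N p = sq N p' -> p = p'.
Proof.
move=> N0; case: p p' => [i j] [i' j'] [e1 _ _ _].
by case: (ph_inj N0 e1) => -> ->.
Qed.

Lemma adj_sq N p p' : (0 < N)%N -> adj (sq N p) (sq N p') = gadj p p'.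
Proof.
move=> N0; rewrite -nat_adj /adj.
have -> : (sq N p == sq N p') = (p == p').
  by apply/eqP/eqP => [/(sq_inj N0)|->].
congr (_ && _).
by case: p p' => [i j] [i' j']; rewrite /sides /sq /nsides /= /same_seg /nseg /= !ph_eq.
Qed.

Lemma vertL N a b c i j : (0 < N)%N -> (a + b + c)%N = N -> i = (b + c)%N -> j = c ->
  pscale (N%:R)^-1 (comb4 Q a%:R b%:R c%:R (0%N)%:R) = ph N i j.
Proof.
move=> N0 s -> ->.
have Nn : N%:R != 0 :> R by rewrite pnatr_eq0 -lt0n.
have Np : 0 < N%:R :> R by rewrite ltr0n.
have ea : a%:R = N%:R - b%:R - c%:R :> R by rewrite -s !natrD; ring.
rewrite /ph PhiL; last by rewrite ler_pM2r ?invr_gt0 // ler_nat leq_addl.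
rewrite /Lf /comb4 /Q /padd /pscale /= ea !natrD.
by congr pair; field.
Qed.

Lemma vertU N a c d i j : (0 < N)%N -> (a + c + d)%N = N -> i = c -> j = (c + d)%N ->
  pscale (N%:R)^-1 (comb4 Q a%:R (0%N)%:R c%:R d%:R) = ph N i j.
Proof.
move=> N0 s -> ->.
have Nn : N%:R != 0 :> R by rewrite pnatr_eq0 -lt0n.
have Np : 0 < N%:R :> R by rewrite ltr0n.
have ea : a%:R = N%:R - c%:R - d%:R :> R by rewrite -s !natrD; ring.
rewrite /ph PhiU; last by rewrite ler_pM2r ?invr_gt0 // ler_nat leq_addr.
rewrite /Uf /comb4 /Q /padd /pscale /= ea !natrD.
by congr pair; field.
Qed.

Lemma Sm_sq N k : (0 < N)%N -> inA N k ->
  Sm Q N k = sq N (k.1.1.2 + k.1.2, k.1.2 + k.2)%N.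
Proof.
case: k => [[[k1 k2] k3] k4] N0 hA.
rewrite /Sm; cbv beta iota zeta.
rewrite /sq.
case h1: (inA1 N (k1, k2, k3, k4)).
  move: h1; rewrite /inA1 => /and3P[/eqP e4 /eqP s nz]; subst k4.
  by congr (_, _, _, _); apply: vertL => //=; lia.
case h2: (inA2 N (k1, k2, k3, k4)).
  move: h2; rewrite /inA2 => /and3P[/eqP e2 /eqP s nz]; subst k2.
  by congr (_, _, _, _); apply: vertU => //=; lia.
move: hA; rewrite /inA h1 h2 /= /inA3 => /and3P[/eqP e2 /eqP e4 /eqP s]; subst k2 k4.
congr (_, _, _, _).
- by apply: vertL => //=; lia.
- by apply: vertL => //=; lia.
- by apply: vertL => //=; lia.
- by apply: vertU => //=; lia.
Qed.
End Geo.

Section Final.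
Variable R : realFieldType.
Variables q1 q2 q3 q4 : pt R.
Let Q : quad R := (q1, q2, q3, q4).
Hypothesis D1p : 0 < det2 (psub q2 q1) (psub q3 q1).
Hypothesis D2p : 0 < det2 (psub q3 q1) (psub q4 q1).

Let sqQ := sq q1 q2 q3 q4.
Let SmQ := Sm Q.

Lemma k2p N k : (0 < N)%N -> inA N k -> inr N (k.1.1.2 + k.1.2, k.1.2 + k.2)%N.
Proof.
case: k => [[[k1 k2] k3] k4]; rewrite /inA /inA1 /inA2 /inA3 /inr /= => N0.
case/or3P => /and3P[/eqP a /eqP b c]; lia.
Qed.

Lemma p2k N p : inr N p -> exists2 k, inA N k & p = (k.1.1.2 + k.1.2, k.1.2 + k.2)%N.
Proof.
case: p => [i j]; rewrite /inr /= => /andP[hi hj].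
case: (ltngtP j i) => h.
- exists (N.-1 - i, i - j, j, 0)%N; last by rewrite /=; congr pair; lia.
  by rewrite /inA /inA1 /inA2 /inA3 /=; lia.
- exists (N.-1 - j, 0, i, j - i)%N; last by rewrite /=; congr pair; lia.
  by rewrite /inA /inA1 /inA2 /inA3 /=; lia.
- exists (N.-1 - i, 0, i, 0)%N; last by rewrite /=; congr pair; lia.
  by rewrite /inA /inA1 /inA2 /inA3 /=; lia.
Qed.

Lemma inSm_sq N q : (0 < N)%N -> inSm Q N q <-> exists2 p, inr N p & q = sqQ N p.
Proof.
move=> N0; split.
  case=> k kA ->; have hr := k2p N0 kA.
  by exists (k.1.1.2 + k.1.2, k.1.2 + k.2)%N => //; rewrite /sqQ -Sm_sq.
case=> p /p2k [k kA ->] ->; exists k => //.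
by rewrite /sqQ Sm_sq.
Qed.

Section Tr.
Variables (N : nat) (W : quad R -> Prop) (P : nat * nat -> Prop).
Hypothesis N0 : (0 < N)%N.
Hypothesis Pr : forall p, P p -> inr N p.
Hypothesis HW : forall q, W q <-> exists2 p, P p & q = sqQ N p.

Lemma W_sq p : W (sqQ N p) <-> P p.
Proof.
split; last by move=> Pp; apply/HW; exists p.
by case/HW => p' Pp' /(sq_inj D1p D2p N0) ->.
Qed.

Lemma W_inSm q : W q -> inSm Q N q.
Proof. by case/HW => p Pp ->; apply/inSm_sq => //; exists p => //; apply: Pr. Qed.

Lemma tree_tr : tree_prop W <-> connw gadj P /\ acycw gadj P.
Proof.
have finj : forall p p', P p -> P p' -> sqQ N p = sqQ N p' -> p = p'.
  by move=> p p' _ _ /(sq_inj D1p D2p N0).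
have fe : forall p p', P p -> P p' -> adj (sqQ N p) (sqQ N p') = gadj p p'.
  by move=> p p' _ _; rewrite /sqQ adj_sq.
have [c1 c2] := conn_tr HW finj fe.
have [a1 a2] := acyc_tr HW finj fe.
split; case=> h1 h2; split; [exact: c2 | exact: a2 | exact: c1 | exact: a1].
Qed.

Lemma Sm_at k p : inA N k -> p = (k.1.1.2 + k.1.2, k.1.2 + k.2)%N -> SmQ N k = sqQ N p.
Proof. by move=> hA ->; rewrite /SmQ /sqQ Sm_sq. Qed.

Lemma exit1_tr :
  (exists! k : nat * nat,
     [/\ inA N (k.1, k.2, 0%N, 0%N), W (SmQ N (k.1, k.2, 0%N, 0%N))
       & W (SmQ N (0%N, 0%N, k.2, k.1))]) <-> gex1 N P.
Proof.
have hA1 : forall k1 k2, inA N (k1, k2, 0, 0)%N = (k1 + k2 == N.-1)%N.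
  by move=> k1 k2; rewrite /inA /inA1 /inA2 /inA3 /=; lia.
have hA2 : forall k1 k2, (k1 + k2 = N.-1)%N -> inA N (0, 0, k2, k1)%N.
  by move=> k1 k2 e; rewrite /inA /inA1 /inA2 /inA3 /=; lia.
have S1 : forall k1 k2, (k1 + k2 = N.-1)%N -> SmQ N (k1, k2, 0, 0)%N = sqQ N (k2, 0)%N.
  by move=> k1 k2 e; apply: Sm_at; [rewrite hA1; apply/eqP | rewrite /= addn0].
have S2 : forall k1 k2, (k1 + k2 = N.-1)%N -> SmQ N (0, 0, k2, k1)%N = sqQ N (k2, N.-1)%N.
  by move=> k1 k2 e; apply: Sm_at; [exact: hA2 | rewrite /= add0n addnC e].
split.
  case=> k [[hA w1 w2] ku].
  have e : (k.1 + k.2 = N.-1)%N by apply/eqP; rewrite -hA1.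
  rewrite S1 // W_sq in w1; rewrite S2 // W_sq in w2.
  split; first by exists k.2.
  have key : forall i, P (i, 0)%N -> P (i, N.-1) -> i = k.2.
    move=> i Pi0 Pi1; have /andP[/= iN _] := Pr Pi0.
    have ei : ((N.-1 - i, i).1 + (N.-1 - i, i).2 = N.-1)%N by rewrite /=; lia.
    have kx : k = (N.-1 - i, i)%N.
      apply: ku; split; first by rewrite hA1 ei.
      - by rewrite S1 //; apply/W_sq.
      - by rewrite S2 //; apply/W_sq.
    by rewrite kx.
  by move=> i i' a b c d; rewrite (key _ a b) (key _ c d).
case=> [[i [Pi0 Pi1]] iu].
have /andP[/= iN _] := Pr Pi0.
have ei : ((N.-1 - i, i).1 + (N.-1 - i, i).2 = N.-1)%N by rewrite /=; lia.
have H3 : [/\ inA N ((N.-1 - i, i).1, (N.-1 - i, i).2, 0, 0)%N,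
  W (SmQ N ((N.-1 - i, i).1, (N.-1 - i, i).2, 0, 0)%N)
  & W (SmQ N (0, 0, (N.-1 - i, i).2, (N.-1 - i, i).1)%N)].
  split; first by rewrite hA1 ei.
  - by rewrite S1 //; apply/W_sq.
  - by rewrite S2 //; apply/W_sq.
exists (N.-1 - i, i)%N; split; first exact: H3.
move=> k Hk.
have [hA w1 w2] : [/\ inA N (k.1, k.2, 0, 0)%N, W (SmQ N (k.1, k.2, 0, 0)%N)
  & W (SmQ N (0, 0, k.2, k.1)%N)] := Hk.
have e : (k.1 + k.2 = N.-1)%N by apply/eqP; rewrite -hA1.
rewrite S1 // W_sq in w1; rewrite S2 // W_sq in w2.
have k2i : k.2 = i by apply: iu.
by case: k e k2i {Hk hA w1 w2} => k1 k2 /= e k2i; subst k2; congr pair; lia.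
Qed.
Lemma exit2_tr :
  (exists! k : nat * nat,
     [/\ inA N (k.1, 0%N, 0%N, k.2), W (SmQ N (k.1, 0%N, 0%N, k.2))
       & W (SmQ N (0%N, k.1, k.2, 0%N))]) <-> gex2 N P.
Proof.
have hA1 : forall k1 k2, inA N (k1, 0, 0, k2)%N = (k1 + k2 == N.-1)%N.
  by move=> k1 k2; rewrite /inA /inA1 /inA2 /inA3 /=; lia.
have hA2 : forall k1 k2, (k1 + k2 = N.-1)%N -> inA N (0, k1, k2, 0)%N.
  by move=> k1 k2 e; rewrite /inA /inA1 /inA2 /inA3 /=; lia.
have S1 : forall k1 k2, (k1 + k2 = N.-1)%N -> SmQ N (k1, 0, 0, k2)%N = sqQ N (0, k2)%N.
  by move=> k1 k2 e; apply: Sm_at; [rewrite hA1; apply/eqP | rewrite /= ?add0n].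
have S2 : forall k1 k2, (k1 + k2 = N.-1)%N -> SmQ N (0, k1, k2, 0)%N = sqQ N (N.-1, k2)%N.
  by move=> k1 k2 e; apply: Sm_at; [exact: hA2 | rewrite /= ?add0n ?addn0 e].
split.
  case=> k [[hA w1 w2] ku].
  have e : (k.1 + k.2 = N.-1)%N by apply/eqP; rewrite -hA1.
  rewrite S1 // W_sq in w1; rewrite S2 // W_sq in w2.
  split; first by exists k.2.
  have key : forall i, P (0, i)%N -> P (N.-1, i) -> i = k.2.
    move=> i Pi0 Pi1; have /andP[/= _ iN] := Pr Pi0.
    have ei : ((N.-1 - i, i).1 + (N.-1 - i, i).2 = N.-1)%N by rewrite /=; lia.
    have kx : k = (N.-1 - i, i)%N.
      apply: ku; split; first by rewrite hA1 ei.
      - by rewrite S1 //; apply/W_sq.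
      - by rewrite S2 //; apply/W_sq.
    by rewrite kx.
  by move=> i i' a b c d; rewrite (key _ a b) (key _ c d).
case=> [[i [Pi0 Pi1]] iu].
have /andP[/= _ iN] := Pr Pi0.
have ei : ((N.-1 - i, i).1 + (N.-1 - i, i).2 = N.-1)%N by rewrite /=; lia.
have H3 : [/\ inA N ((N.-1 - i, i).1, 0, 0, (N.-1 - i, i).2)%N,
  W (SmQ N ((N.-1 - i, i).1, 0, 0, (N.-1 - i, i).2)%N)
  & W (SmQ N (0, (N.-1 - i, i).1, (N.-1 - i, i).2, 0)%N)].
  split; first by rewrite hA1 ei.
  - by rewrite S1 //; apply/W_sq.
  - by rewrite S2 //; apply/W_sq.
exists (N.-1 - i, i)%N; split; first exact: H3.
move=> k Hk.
have [hA w1 w2] : [/\ inA N (k.1, 0, 0, k.2)%N, W (SmQ N (k.1, 0, 0, k.2)%N)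
  & W (SmQ N (0, k.1, k.2, 0)%N)] := Hk.
have e : (k.1 + k.2 = N.-1)%N by apply/eqP; rewrite -hA1.
rewrite S1 // W_sq in w1; rewrite S2 // W_sq in w2.
have k2i : k.2 = i by apply: iu.
by case: k e k2i {Hk hA w1 w2} => k1 k2 /= e k2i; subst k2; congr pair; lia.
Qed.

Lemma corner_tr : (2 <= N)%N -> corner_prop Q N W <-> gcorner N P.
Proof.
move=> N2.
have c1 : SmQ N (N.-1, 0, 0, 0)%N = sqQ N (0, 0)%N.
  by apply: Sm_at; [rewrite /inA /inA1 /inA2 /inA3 /=; lia | rewrite /=].
have c2 : SmQ N (0, 0, N.-1, 0)%N = sqQ N (N.-1, N.-1)%N.
  by apply: Sm_at; [rewrite /inA /inA1 /inA2 /inA3 /=; lia | rewrite /= ?add0n ?addn0].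
have c3 : SmQ N (0, N.-1, 0, 0)%N = sqQ N (N.-1, 0)%N.
  by apply: Sm_at; [rewrite /inA /inA1 /inA2 /inA3 /=; lia | rewrite /= ?add0n ?addn0].
have c4 : SmQ N (0, 0, 0, N.-1)%N = sqQ N (0, N.-1)%N.
  by apply: Sm_at; [rewrite /inA /inA1 /inA2 /inA3 /=; lia | rewrite /= ?add0n ?addn0].
rewrite /corner_prop /gcorner -/SmQ c1 c2 c3 c4.
split; case=> h1 h2; split.
- by case=> /W_sq a /W_sq b; apply: h1.
- by case=> /W_sq a /W_sq b; apply: h2.
- by case=> a b; apply: h1; split; apply/W_sq.
- by case=> a b; apply: h2; split; apply/W_sq.
Qed.
End Tr.

Section Main.
Variables (m : nat) (W1 : quad R -> Prop).
Hypothesis lab : labyrinth Q m W1.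

Let P1 p := inr m p /\ W1 (sqQ m p).

Lemma m4 : (4 <= m)%N. Proof. by case: lab. Qed.
Lemma m0 : (0 < m)%N. Proof. by have := m4; case: m. Qed.

Lemma HW1 q : W1 q <-> exists2 p, P1 p & q = sqQ m p.
Proof.
split; last by case=> p [_ h] ->.
move=> Wq; case: lab => _ hS _ _ _.
case/(inSm_sq _ m0): (hS _ Wq) => p pr e.
by exists p => //; split => //; rewrite -e.
Qed.

Lemma glab1 : glab m P1.
Proof.
have Pr : forall p, P1 p -> inr m p by move=> p [].
case: lab => _ _ ht [he1 he2] hc.
split => //.
- by case/(tree_tr m0 HW1): ht.
- by case/(tree_tr m0 HW1): ht.
- by split; [apply/(exit1_tr m0 Pr HW1) | apply/(exit2_tr m0 Pr HW1)].
- have m2 : (2 <= m)%N by apply: leq_trans m4.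
  exact: (proj1 (corner_tr m0 HW1 m2) hc).
Qed.

Lemma HWn n : (0 < n)%N -> forall q,
  Wn Q W1 n q <-> exists2 p, Gn m P1 n p & q = sqQ (m ^ n) p.
Proof.
elim: n => [//|n IH] _; case: n IH => [|n] IH.
  by rewrite expn1; exact: HW1.
have mn0 : (0 < m ^ n.+1)%N by rewrite expn_gt0 m0.
move=> q; split.
  case=> W [W' [hW hW' ->]].
  case/(IH isT): hW => s Gs ->; case/HW1: hW' => t Pt ->.
  have tr : inr m t by case: Pt.
  exists (fm m (s, t)); first by exists (s, t).
  by rewrite /sqQ Pquad_sq ?m0 // [(m ^ n.+2)%N]expnSr.
case=> p [[s t] [Gs [tr Wt]] ->] ->.
exists (sqQ (m ^ n.+1) s), (sqQ m t); split.
- by apply/(IH isT); exists s.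
- by [].
- by rewrite /sqQ Pquad_sq ?m0 // [(m ^ n.+2)%N]expnSr.
Qed.

Lemma main_sec n : (0 < n)%N -> labyrinth Q (m ^ n) (Wn Q W1 n).
Proof.
move=> n0.
have := glab_Gn m0 glab1 n0 => -[Gr Gc Ga [Ge1 Ge2] Gco].
have mn0 : (0 < m ^ n)%N by rewrite expn_gt0 m0.
have mn4 : (4 <= m ^ n)%N.
  apply: leq_trans m4 _; case: n n0 {Gr Gc Ga Ge1 Ge2 Gco mn0} => // n _.
  by rewrite expnS leq_pmulr // expn_gt0 m0.
have HW := HWn n0.
split => //.
- exact: W_inSm mn0 Gr HW.
- by apply/(tree_tr mn0 HW).
- by split; [apply/(exit1_tr mn0 Gr HW) | apply/(exit2_tr mn0 Gr HW)].
- have m2 : (2 <= m ^ n)%N by apply: leq_trans mn4.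
  by apply/(corner_tr mn0 HW m2).
Qed.
End Main.
End Final.

End Aux.

Local Open Scope ring_scope.

Theorem proposition3p2 (R : realFieldType) (Q : quad R) (m : nat)
    (W1 : quad R -> Prop) :
  convex_acw Q -> shorter_diag13 Q -> (4 <= m)%N ->
  labyrinth Q m W1 ->
  forall n : nat, (1 <= n)%N -> labyrinth Q (m ^ n) (Wn Q W1 n).
Proof.
case: Q => [[[q1 q2] q3] q4] [c1 c2 c3 c4] _ _ lab n n1.
have D2p : 0 < det2 (psub q3 q1) (psub q4 q1).
  have e : det2 (psub q4 q3) (psub q1 q3) = det2 (psub q3 q1) (psub q4 q1).
    by rewrite /det2 /psub /=; ring.
  by rewrite -e.
exact: (Aux.main_sec c1 D2p lab n1).
Qed.
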